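(* Let $\beta\in(1,3/2]$ and let $S_\beta$, $T_\beta$, $L_\beta$ be as in the context. Let $\mathcal{S}$ be the Borel $\sigma$-algebra on $S_\beta$, let $\mu$ be an arbitrary $T_\beta$-invariant probability measure on $(S_\beta,\mathcal{S})$, and let $\psi:S_\beta\to S_\beta$ be $\psi(x,y)=\bigl(x,\ \tfrac{1}{\beta-1}-x-y\bigr)$. Put $\nu=\mu\circ\psi^{-1}$. Then the dynamical systems $(S_\beta,\mathcal{S},\mu,T_\beta)$ and $(S_\beta,\mathcal{S},\nu,L_\beta)$ are isomorphic (in the usual measure-theoretic sense).
   Context: Let $\vec q_0=(0,0)$, $\vec q_1=(1,0)$, $\vec q_2=(0,1)$ and $f_{\vec q_i}(\vec z)=(\vec z+\vec q_i)/\beta$ for $i=0,1,2$. $S_\beta$ denotes the attractor of this IFS (the unique nonempty compact set with $S_\beta=\bigcup_i f_{\vec q_i}(S_\beta)$); for $1<\beta\le 3/2$ it equals the closed triangle with vertices $(0,0)$, $(\frac{1}{\beta-1},0)$, $(0,\frac{1}{\beta-1})$. Define the following subsets of $S_\beta$: $E_0=[0,\frac1\beta)\times[0,\frac1\beta)$; $E_1=\{(x,y):0\le y<\frac1\beta,\ \frac{1}{\beta(\beta-1)}<x+y\le\frac{1}{\beta-1}\}$; $E_2=\{(x,y):0\le x<\frac1\beta,\ \frac{1}{\beta(\beta-1)}<x+y\le\frac{1}{\beta-1}\}$; $C_{01}=\{(x,y):x\ge\frac1\beta,\ 0\le y<\frac1\beta,\ x+y\le\frac{1}{\beta(\beta-1)}\}$;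 $C_{12}=\{(x,y):x\ge\frac1\beta,\ y\ge\frac1\beta,\ \frac{1}{\beta(\beta-1)}<x+y\le\frac{1}{\beta-1}\}$; $C_{02}=\{(x,y):0\le x<\frac1\beta,\ y\ge\frac1\beta,\ x+y\le\frac{1}{\beta(\beta-1)}\}$; $C_{012}=\{(x,y):x\ge\frac1\beta,\ y\ge\frac1\beta,\ x+y\le\frac{1}{\beta(\beta-1)}\}$. The greedy map $T_\beta:S_\beta\to S_\beta$ is $T_\beta(\vec z)=\beta\vec z$ on $E_0$; $\beta\vec z-\vec q_1$ on $C_{01}\cup E_1$; $\beta\vec z-\vec q_2$ on $C_{012}\cup C_{12}\cup C_{02}\cup E_2$. The lazy map $L_\beta:S_\beta\to S_\beta$ is $L_\beta(\vec z)=\beta\vec z$ on $C_{012}\cup C_{01}\cup C_{02}\cup E_0$; $\beta\vec z-\vec q_1$ on $C_{12}\cup E_1$; $\beta\vec z-\vec q_2$ on $E_2$. *)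

(* Defs.v *)
(* Points of the plane are pairs (x, y) : R * R,
   with the product sigma-algebra of the Borel sigma-algebras of R
   (= Borel sigma-algebra of R^2). *)
From HB Require Import structures.
From mathcomp Require Import all_boot all_order all_algebra.
From mathcomp Require Import all_classical all_reals all_analysis.
Set Implicit Arguments. Unset Strict Implicit. Unset Printing Implicit Defensive.
Import Order.TTheory GRing.Theory Num.Theory.
Local Open Scope classical_set_scope.
Local Open Scope ring_scope.

Section Defs.
Variable R : realType.
Implicit Types (beta : R) (z : R * R).

Definition inS beta z : bool :=
  [&& 0 <= z.1, 0 <= z.2 & z.1 + z.2 <= (beta - 1)^-1].
Definition Sbeta beta : set (R * R) := [set z | inS beta z].

Definition inE0 beta z : bool := inS beta z && (z.1 < beta^-1) && (z.2 < beta^-1).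
Definition inE1 beta z : bool := inS beta z && (0 <= z.2) && (z.2 < beta^-1) &&
  ((beta * (beta - 1))^-1 < z.1 + z.2) && (z.1 + z.2 <= (beta - 1)^-1).
Definition inE2 beta z : bool := inS beta z && (0 <= z.1) && (z.1 < beta^-1) &&
  ((beta * (beta - 1))^-1 < z.1 + z.2) && (z.1 + z.2 <= (beta - 1)^-1).
Definition inC01 beta z : bool := inS beta z && (beta^-1 <= z.1) && (0 <= z.2) &&
  (z.2 < beta^-1) && (z.1 + z.2 <= (beta * (beta - 1))^-1).
Definition inC12 beta z : bool := inS beta z && (beta^-1 <= z.1) && (beta^-1 <= z.2) &&
  ((beta * (beta - 1))^-1 < z.1 + z.2) && (z.1 + z.2 <= (beta - 1)^-1).
Definition inC02 beta z : bool := inS beta z && (0 <= z.1) && (z.1 < beta^-1) &&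
  (beta^-1 <= z.2) && (z.1 + z.2 <= (beta * (beta - 1))^-1).
Definition inC012 beta z : bool := inS beta z && (beta^-1 <= z.1) && (beta^-1 <= z.2) &&
  (z.1 + z.2 <= (beta * (beta - 1))^-1).

(* f_{q}^{-1}: z |-> beta z - q, with q0 = (0,0), q1 = (1,0), q2 = (0,1) *)
Definition expand0 beta z : R * R := (beta * z.1, beta * z.2).
Definition expand1 beta z : R * R := (beta * z.1 - 1, beta * z.2).
Definition expand2 beta z : R * R := (beta * z.1, beta * z.2 - 1).

(* Greedy map T_beta on S_beta; outside S_beta (a mu-null set) it is
   extended by the identity, an arbitrary convention. *)
Definition Tgreedy beta z : R * R :=
  if inE0 beta z then expand0 beta z
  else if inC01 beta z || inE1 beta z then expand1 beta z
  else if [|| inC012 beta z, inC12 beta z, inC02 beta z | inE2 beta z]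
       then expand2 beta z
  else z.

(* Lazy map L_beta, extended by the identity outside S_beta. *)
Definition Llazy beta z : R * R :=
  if [|| inC012 beta z, inC01 beta z, inC02 beta z | inE0 beta z]
    then expand0 beta z
  else if inC12 beta z || inE1 beta z then expand1 beta z
  else if inE2 beta z then expand2 beta z
  else z.

Definition psi beta z : R * R := (z.1, (beta - 1)^-1 - z.1 - z.2).

End Defs.

(* (X, mu, T) with X = R*R (mu concentrated on S_beta) is a measure-preserving
   system; isomorphism in the usual measure-theoretic sense: there are
   measurable invariant full-measure subsets X0, Y0 of S_beta and a bimeasurable
   bijection phi : X0 -> Y0 (with inverse phi') which is measure preserving and
   conjugates T to L. *)
Definition mp_isomorphic (R : realType) (K : set (R * R))
  (mu : {measure set (R * R) -> \bar R}) (T : R * R -> R * R)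
  (nu : {measure set (R * R) -> \bar R}) (L : R * R -> R * R) : Prop :=
  exists (X0 Y0 : set (R * R)) (phi phi' : R * R -> R * R),
    measurable X0 /\ measurable Y0 /\ X0 `<=` K /\ Y0 `<=` K /\
    mu X0 = 1%E /\ nu Y0 = 1%E /\
    T @` X0 `<=` X0 /\ L @` Y0 `<=` Y0 /\
    measurable_fun setT phi /\ measurable_fun setT phi' /\
    phi @` X0 `<=` Y0 /\ phi' @` Y0 `<=` X0 /\
    (forall x, X0 x -> phi' (phi x) = x) /\
    (forall y, Y0 y -> phi (phi' y) = y) /\
    (forall B, measurable B -> B `<=` Y0 -> mu (X0 `&` phi @^-1` B) = nu B) /\
    (forall x, X0 x -> phi (T x) = L (phi x)).

(* Main.v *)
Require Import Defs.
From HB Require Import structures.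
From mathcomp Require Import all_boot all_order all_algebra.
From mathcomp Require Import all_classical all_reals all_analysis.
From mathcomp Require Import ring lra.
Import Order.TTheory GRing.Theory Num.Theory.
Local Open Scope classical_set_scope.
Local Open Scope ring_scope.

Section Aux.
Variable R : realType.
Variable beta : R.
Hypothesis hb1 : 1 < beta.
Hypothesis hb2 : beta <= 3%:R / 2%:R.

Let hb0 : beta != 0. Proof. by rewrite gt_eqF // (lt_trans ltr01 hb1). Qed.
Let hbm : beta - 1 != 0. Proof. by rewrite subr_eq0 gt_eqF. Qed.

Lemma dE : (beta * (beta - 1))^-1 = (beta - 1)^-1 - beta^-1.
Proof. by field; apply/andP; split. Qed.

Lemma u_pos : 0 < beta^-1.
Proof. by rewrite invr_gt0 (lt_trans ltr01 hb1). Qed.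

Lemma c_pos : 0 < (beta - 1)^-1.
Proof. by rewrite invr_gt0 subr_gt0. Qed.

Lemma two_u : 2%:R * beta^-1 <= (beta * (beta - 1))^-1.
Proof.
have e : (beta * (beta - 1))^-1 - 2%:R * beta^-1 =
   (3%:R - 2%:R * beta) * (beta^-1 * (beta - 1)^-1).
  by field; apply/andP; split.
have h2 : 2%:R * beta <= 3%:R by rewrite mulrC -ler_pdivlMr // ltr0n.
rewrite -subr_ge0 e; apply: mulr_ge0; first by rewrite subr_ge0.
by apply: mulr_ge0; apply: ltW; [apply: u_pos | apply: c_pos].
Qed.


Lemma T_char z : inS beta z -> Tgreedy beta z =
  if (z.1 < beta^-1) && (z.2 < beta^-1) then Defs.expand0 beta z
  else if z.2 < beta^-1 then Defs.expand1 beta z else Defs.expand2 beta z.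
Proof.
move=> hS; have /and3P [h1 h2 h3] := hS.
rewrite /Tgreedy /inE0 /inC01 /inE1 /inC012 /inC12 /inC02 /inE2 hS h1 h2 h3 /= !leNgt.
by case: (z.1 < _); case: (z.2 < _); case: (_ < z.1 + z.2).
Qed.

Lemma L_char z : inS beta z -> Llazy beta z =
  if ~~ ((beta * (beta - 1))^-1 < z.1 + z.2) || ((z.1 < beta^-1) && (z.2 < beta^-1))
  then Defs.expand0 beta z
  else if ~~ (z.1 < beta^-1) then Defs.expand1 beta z else Defs.expand2 beta z.
Proof.
move=> hS; have /and3P [h1 h2 h3] := hS.
rewrite /Llazy /inE0 /inC01 /inE1 /inC012 /inC12 /inC02 /inE2 hS h1 h2 h3 /= !leNgt.
by case: (z.1 < _); case: (z.2 < _); case: (_ < z.1 + z.2).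
Qed.


Lemma psiS z : inS beta (psi beta z) = inS beta z.
Proof.
rewrite /inS /psi /=.
by apply/idP/idP => /and3P [h1 h2 h3]; apply/and3P; split; lra.
Qed.

Lemma psiK z : psi beta (psi beta z) = z.
Proof. by case: z => x y; rewrite /psi /=; congr pair; ring. Qed.

Lemma conjTL z : psi beta (Tgreedy beta z) = Llazy beta (psi beta z).
Proof.
have [hS|hS] := boolP (inS beta z); last first.
  have hS' : inS beta (psi beta z) = false by rewrite psiS; apply/negbTE.
  rewrite /Tgreedy /Llazy /inE0 /inC01 /inE1 /inC012 /inC12 /inC02 /inE2.
  by rewrite (negbTE hS) hS'.
rewrite T_char // L_char ?psiS //.
have /and3P [h1 h2 h3] := hS.
have hu := two_u.
have e1 : ((beta * (beta - 1))^-1 < (psi beta z).1 + (psi beta z).2) = (z.2 < beta^-1).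
  by rewrite /psi /= dE; apply/idP/idP => ?; lra.
have e2 : ((psi beta z).2 < beta^-1) = ((beta * (beta - 1))^-1 < z.1 + z.2).
  by rewrite /psi /= dE; apply/idP/idP => ?; lra.
rewrite e1 e2 [(psi beta z).1]/=.
case: z hS h1 h2 h3 e1 e2 => x y /= hS h1 h2 h3 _ _.
have [hA|hA] := ltP x beta^-1; have [hB|hB] := ltP y beta^-1;
  have [hC|hC] := ltP ((beta * (beta - 1))^-1) (x + y) => /=;
  rewrite /psi /Defs.expand0 /Defs.expand1 /Defs.expand2 /=;
  try (exfalso; lra);
  by congr pair; field.
Qed.


Lemma TS z : inS beta z -> inS beta (Tgreedy beta z).
Proof.
move=> hS; rewrite T_char //.
have /and3P [h1 h2 h3] := hS.
have hu := two_u.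
have hd := dE.
have hub : beta * beta^-1 = 1 by rewrite mulfV.
have hcb : beta * (beta - 1)^-1 - 1 = (beta - 1)^-1 by field.
case: z hS h1 h2 h3 => x y /= hS h1 h2 h3.
rewrite /inS /Defs.expand0 /Defs.expand1 /Defs.expand2.
have hbp : 0 < beta by apply: lt_trans hb1.
have hx0 : 0 <= beta * x by apply: mulr_ge0 => //; apply: ltW.
have hy0 : 0 <= beta * y by apply: mulr_ge0 => //; apply: ltW.
have hs : beta * x + beta * y <= beta * (beta - 1)^-1.
  by rewrite -mulrDr ler_pM2l.
have [hA|hA] := ltP x beta^-1; have [hB|hB] := ltP y beta^-1 => /=.
- have hx : beta * x < 1 by rewrite -hub ltr_pM2l.
  have hy : beta * y < 1 by rewrite -hub ltr_pM2l.
  apply/and3P; split => //.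
  have : 2%:R <= (beta - 1)^-1.
    have e : (beta - 1)^-1 - 2%:R = (3%:R - 2%:R * beta) * (beta - 1)^-1 by field.
    rewrite -subr_ge0 e; apply: mulr_ge0; last exact: ltW c_pos.
    have : 2%:R * beta <= 3%:R by rewrite mulrC -ler_pdivlMr // ltr0n.
    lra.
  lra.
- have hy : 1 <= beta * y by rewrite -hub ler_pM2l.
  apply/and3P; split => //; lra.
- have hx : 1 <= beta * x by rewrite -hub ler_pM2l.
  apply/and3P; split => //; lra.
- have hy : 1 <= beta * y by rewrite -hub ler_pM2l.
  apply/and3P; split => //; lra.
Qed.

End Aux.

Lemma psi_mfun (R : realType) (beta : R) : measurable_fun setT (psi beta).
Proof.
rewrite /psi; apply: measurable_fun_pair; first exact: measurable_fst.
apply: measurable_realfun.measurable_funB; last exact: measurable_snd.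
apply: measurable_realfun.measurable_funB; first exact: measurable_cst.
exact: measurable_fst.
Qed.

Lemma S_meas (R : realType) (beta : R) : measurable (Sbeta beta).
Proof.
have m1 : measurable_fun setT (fun z : R * R => z.1) := measurable_fst.
have m2 : measurable_fun setT (fun z : R * R => z.2) := measurable_snd.
have m3 : measurable_fun setT (fun z : R * R => z.1 + z.2).
  by apply: measurable_realfun.measurable_funD.
have M1 := m1 measurableT _ (measurable_itv `[0, +oo[).
have M2 := m2 measurableT _ (measurable_itv `[0, +oo[).
have M3 := m3 measurableT _ (measurable_itv `]-oo, (beta - 1)^-1]).
have -> : Sbeta beta = (setT `&` (fun z : R * R => z.1) @^-1` [set` `[0, +oo[])
   `&` (setT `&` (fun z : R * R => z.2) @^-1` [set` `[0, +oo[])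
   `&` (setT `&` (fun z : R * R => z.1 + z.2) @^-1` [set` `]-oo, (beta - 1)^-1]]).
  apply/seteqP; split => z /=; rewrite /Sbeta /inS /= !in_itv /= ?andbT.
    by move=> /and3P [h1 h2 h3].
  by move=> [[[_ h1] [_ h2]] [_ h3]]; apply/and3P.
by apply: measurableI; [apply: measurableI|].
Qed.

Theorem theorem3p2 (R : realType) (beta : R)
  (hb1 : 1 < beta) (hb2 : beta <= 3%:R / 2%:R)
  (mu : probability (R * R)%type R)
  (hmuS : mu (Sbeta beta) = 1%E)
  (hinv : forall A : set (R * R), measurable A ->
            mu (Tgreedy beta @^-1` A) = mu A)
  (nu : probability (R * R)%type R)
  (hnu : forall A : set (R * R), measurable A ->
            nu A = mu (psi beta @^-1` A)) :
  mp_isomorphic (Sbeta beta) mu (Tgreedy beta) nu (Llazy beta).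
Proof.
have TS' := TS _ _ hb1 hb2.
have conj' := conjTL _ _ hb1 hb2.
have psiK' := psiK _ beta.
have hS := S_meas _ beta.
have pS z : Sbeta beta (psi beta z) <-> Sbeta beta z.
  by rewrite /Sbeta /= (psiS _ beta).
have psiSet : psi beta @^-1` Sbeta beta = Sbeta beta.
  by apply/seteqP; split => z /= /pS.
exists (Sbeta beta), (Sbeta beta), (psi beta), (psi beta).
do 4 (split => //).
split => //.
split; first by have := hnu _ hS; rewrite psiSet hmuS; apply.
split; first by move=> _ [z hz <-]; apply: TS'.
split.
  move=> _ [z hz <-]; rewrite -[z]psiK' -conj'.
  by apply/pS; apply: TS' => //; apply/pS.
split; first exact: (psi_mfun _ beta).
split; first exact: (psi_mfun _ beta).
split; first by move=> _ [z hz <-]; apply/pS.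
split; first by move=> _ [z hz <-]; apply/pS.
split; first by move=> x _; rewrite psiK'.
split; first by move=> x _; rewrite psiK'.
split; last by move=> x _; apply: conj'.
move=> B mB sB; have h := hnu _ mB; apply: eq_trans (esym h).
congr (mu _); apply/setIidr => z /= hB.
by apply/pS; apply: sB.
Qed.
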